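(* For every rooted tree $T_r=(V,E)$, $$f(T_r)\ \ge\ \frac{|V|}{2\,h(T_r)}-\frac{1}{2}.$$
   Context: For a tree $T_r$ rooted at $r$, $h(T_r)$ is the number of vertices on a longest path in $T_r$ starting at $r$ (a single vertex has $h=1$); the empty tree $T_\emptyset$ has $h(T_\emptyset)=0$ and $f(T_\emptyset)=0$. For a vertex $v$, $T_v$ is the subtree rooted at $v$ consisting of $v$ and its descendants. The function $f$ is defined recursively: if $|V(T_r)|\le1$ then $f(T_r)=0$; otherwise let the children of $r$ be $v_1,\dots,v_k$ ordered so that $h(T_{v_1})\ge\dots\ge h(T_{v_k})$, where if the number of children is odd an extra empty tree $T_{v_k}=T_\emptyset$ is appended so that $k$ is even; then $f(T_r)=\max\{\sum_{i=1}^k f(T_{v_i}),\ \sum_{i=1}^{k/2} h(T_{v_{2i}})\}$. *)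

(* Defs.v *)
(* Rooted trees as finite rose trees: a vertex with the
   (finite, unordered-in-spirit) list of its children subtrees. *)
From mathcomp Require Import all_boot all_order all_algebra.
Set Implicit Arguments. Unset Strict Implicit. Unset Printing Implicit Defensive.

Inductive rtree : Type := Node of seq rtree.

Fixpoint tree_size (t : rtree) : nat :=
  let: Node ts := t in (sumn (map tree_size ts)).+1.

(* h(T_r) : number of vertices on a longest path starting at the root *)
Fixpoint theight (t : rtree) : nat :=
  let: Node ts := t in (foldr maxn 0 (map theight ts)).+1.

(* given x_1, x_2, x_3, ... returns x_2 + x_4 + ...; a trailing unpaired
   element is paired with the empty tree (h = 0), contributing 0. *)
Fixpoint sum_even_pos (s : seq nat) : nat :=
  match s with
  | _ :: y :: r => y + sum_even_pos r
  | _ => 0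
  end.

Fixpoint tf (t : rtree) : nat :=
  let: Node ts := t in
  match ts with
  | [::] => 0
  | _ :: _ => maxn (sumn (map tf ts))
                   (sum_even_pos (sort geq (map theight ts)))
  end.

(* Main.v *)
Require Import Defs.
From mathcomp Require Import all_boot all_order all_algebra.
From mathcomp Require Import zify ring.
Import Order.TTheory GRing.Theory Num.Theory.

Fixpoint rtree_ind' (P : rtree -> Prop)
  (H : forall ts, List.Forall P ts -> P (Node ts)) (t : rtree) : P t :=
  match t with
  | Node ts => H ts ((fix go (l : seq rtree) : List.Forall P l :=
       match l with
       | [::] => @List.Forall_nil _ P
       | c :: r => @List.Forall_cons _ P c r (rtree_ind' P H c) (go r)
       end) ts)
  end.

Lemma geq_tot : total geq.
Proof. move=> x y /=; exact: leq_total. Qed.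

Lemma geq_trans : transitive geq.
Proof. move=> x y z /= h1 h2; exact: leq_trans h2 h1. Qed.

Lemma sorted_bound n : forall (s : seq nat) M, size s <= n -> sorted geq s ->
  all (fun x => x <= M) s -> sumn s <= M + 2 * sum_even_pos s.
Proof.
elim: n => [|n IH] [|x [|y r]] M //= hs hsort hall.
- by move: hall => /andP[]; lia.
- move: hsort => /andP [hxy hp].
  move: hall => /and3P [hx hy _].
  have hr : sumn r <= y + 2 * sum_even_pos r.
    apply: IH.
    + by move: hs; rewrite /=; lia.
    + exact: path_sorted hp.
    + by have := order_path_min geq_trans hp; apply: sub_all => z /=.
  lia.
Qed.

Lemma all_le_max (s : seq nat) : all (fun x => x <= foldr maxn 0 s) s.
Proof.
elim: s => //= x s IH; rewrite leq_maxl /=.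
by apply: sub_all IH => z /= h; apply: leq_trans h (leq_maxr _ _).
Qed.

Lemma sizes_bound (ts : seq rtree) M :
  List.Forall (fun c => tree_size c <= theight c * (2 * tf c + 1)) ts ->
  all (fun x => x <= M) (map theight ts) ->
  sumn (map tree_size ts) <= 2 * M * sumn (map tf ts) + sumn (map theight ts).
Proof.
elim: ts => //= c r IH hF /andP [hc hall].
inversion hF; subst.
have := IH H2 hall.
have h1 : theight c * tf c <= M * tf c by apply: leq_mul.
lia.
Qed.

Lemma main_nat (t : rtree) : tree_size t <= theight t * (2 * tf t + 1).
Proof.
elim/rtree_ind': t => ts HF.
case: ts HF => [|c0 r0] HF; first by [].
set ts := c0 :: r0.
rewrite [tree_size _]/= [theight _]/= [tf _]/= -/ts.
set M := foldr maxn 0 (map theight ts).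
set F := sumn (map tf ts).
set S := sum_even_pos (sort geq (map theight ts)).
have hall : all (fun x => x <= M) (map theight ts) by apply: all_le_max.
have h1 := sizes_bound ts M HF hall.
have h2 : sumn (map theight ts) <= M + 2 * S.
  rewrite -(perm_sumn (permEl (perm_sort geq _))).
  apply: (@sorted_bound (size (sort geq (map theight ts)))) => //.
  - exact: sort_sorted geq_tot _.
  - by rewrite all_sort.
have hF : F <= maxn F S by apply: leq_maxl.
have hS : S <= maxn F S by apply: leq_maxr.
move: h1 h2 hF hS; rewrite -/F.
set f := maxn F S.
move=> h1 h2 hF hS.
have hMF : M * F <= M * f by apply: leq_mul.
have e1 : 2 * M * F = 2 * (M * F) by rewrite mulnA.
rewrite e1 in h1.
have e2 : M.+1 * (2 * f + 1) = 2 * (M * f) + M + 2 * f + 1 by rewrite mulSn mulnDr mulnA (mulnC M 2); lia.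
rewrite e2.
have -> : tree_size c0 + sumn (map tree_size r0) = sumn (map tree_size ts) by [].
clearbody M F S f ts. lia.
Qed.

Local Open Scope ring_scope.

Theorem lemma2 (t : rtree) :
  (tree_size t)%:R / (2 * theight t)%:R - 1 / 2 <= (tf t)%:R :> rat.
Proof.
have H := main_nat t.
have hp : (0 < theight t)%N by case: t {H}.
have hp' : 0 < (2 * theight t)%:R :> rat by rewrite ltr0n; lia.
rewrite lerBlDr ler_pdivrMr //.
have -> : (tf t)%:R + 1 / 2 = ((2 * tf t + 1)%:R / 2 : rat).
  by rewrite natrD natrM mulrDl mulrAC divff ?pnatr_eq0 // !mul1r.
rewrite [(2 * theight t)%:R]natrM -mulrA mulKf ?pnatr_eq0 //.
have H' : (tree_size t)%:R <= (theight t * (2 * tf t + 1))%:R :> rat.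
  rewrite ler_nat; exact: H.
rewrite natrM mulrC in H'; exact: H'.
Qed.
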